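(* Let $S=(s_{ij})$ be an irreducible $k\times k$ matrix with nonnegative integer entries. If the system of equations $n_is_{ij}=n_js_{ji}$ ($1\le i,j\le k$) has a non-trivial solution $(n_1,\dots,n_k)$, then there exists a connected $S$-regular graph.
   Context: A square matrix is irreducible if its associated directed graph (an arc $i\to j$ iff the $(i,j)$ entry is nonzero) is strongly connected. A simple undirected graph $G=(V,E)$ is $S$-regular if $V$ has a partition into nonempty cells $V_1,\dots,V_k$ such that every vertex $v\in V_i$ has exactly $s_{ij}$ neighbours in $V_j$, for all $i,j$. *)

(* Defs.v *)
From mathcomp Require Import all_boot all_order all_algebra.
Set Implicit Arguments. Unset Strict Implicit. Unset Printing Implicit Defensive.

Definition mx_digraph (k : nat) (S : 'M[nat]_k) : rel 'I_k :=
  fun i j => S i j != 0%N.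

Definition irreducible_mx (k : nat) (S : 'M[nat]_k) : Prop :=
  forall i j : 'I_k, connect (mx_digraph S) i j.

Definition simple_graph (T : finType) (e : rel T) : Prop :=
  symmetric e /\ irreflexive e.

Definition connected_graph (T : finType) (e : rel T) : Prop :=
  forall x y : T, connect e x y.

(* S-regular: a partition of the vertices into nonempty cells V_1..V_k,
   given by the cell map c : T -> 'I_k (surjective = cells nonempty), such that
   every v in V_i has exactly s_ij neighbours in V_j. *)
Definition S_regular (k : nat) (S : 'M[nat]_k) (T : finType) (e : rel T) : Prop :=
  exists c : T -> 'I_k,
    (forall i : 'I_k, exists v : T, c v = i) /\
    (forall (v : T) (j : 'I_k), #|[set w | e v w & c w == j]| = S (c v) j).

(* Main.v *)
Require Import Defs.
From mathcomp Require Import all_boot all_order all_algebra.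
From mathcomp Require Import zify.
Set Implicit Arguments. Unset Strict Implicit. Unset Printing Implicit Defensive.


Lemma sum_lt_min d r : \sum_(0 <= z < d) (z < r) = minn r d.
Proof.
elim: d => [|d IH]; first by rewrite big_geq // minn0.
rewrite big_nat_recr //= IH; case: ltnP => H; lia.
Qed.

Lemma sum_window x d r : r <= d -> \sum_(0 <= z < d) ((x + z) %% d < r) = r.
Proof.
move=> rd; elim: x => [|x IH].
  rewrite (eq_big_nat _ _ (F2 := fun z => (z < r) : nat)); last first.
    by move=> z /andP[_ zd]; rewrite add0n modn_small.
  by rewrite sum_lt_min; apply/minn_idPl.
case: d rd IH => [|d] rd IH; first by rewrite big_geq //; lia.
rewrite big_nat_recl // in IH.
rewrite big_nat_recr //.
have E1 : (x.+1 + d) %% d.+1 = (x + 0) %% d.+1 by rewrite addn0 addSnnS modnDr.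
rewrite E1.
rewrite (eq_big_nat _ _ (F2 := fun z => ((x + z.+1) %% d.+1 < r) : nat)); last first.
  by move=> z _; rewrite addSnnS.
move: IH; rewrite addn0 /= addnC => H; exact H.
Qed.

Lemma sum_window_mul x d q r : r <= d ->
  \sum_(0 <= y < d * q) ((x + y) %% d < r) = r * q.
Proof.
move=> rd; elim: q => [|q IH]; first by rewrite !muln0 big_geq.
rewrite mulnS addnC (big_cat_nat _ (n := d * q)) //=; last exact: leq_addr.
rewrite IH.
have -> : d * q = 0 + d * q by [].
rewrite big_addn add0n addKn.
rewrite (eq_big_nat _ _ (F2 := fun z => ((x + z) %% d < r) : nat)); last first.
  by move=> z _; rewrite addnA [_ + d * q]addnC mulnC modnMDl.
rewrite sum_window //; lia.
Qed.

Lemma Tagged_inj (I : eqType) (T_ : I -> Type) (j : I) : injective (@Tagged I j T_).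
Proof.
move=> x y E.
have h1 := @tagged_asE I T_ (Tagged T_ x) x.
have h2 := @tagged_asE I T_ (Tagged T_ x) y.
rewrite -E in h2. by rewrite -h1 -[in RHS]h2.
Qed.

Definition hv k (n : 'I_k -> nat) m i := n i * m.+1.
Definition av k (n : 'I_k -> nat) m i := n i * (m.+1 * 2).
Definition VT k (n : 'I_k -> nat) m : finType := {i : 'I_k & 'I_(av n m i)}.
Definition gv k (n : 'I_k -> nat) m i j := gcdn (av n m i) (av n m j).
Definition rv k (S : 'M[nat]_k) n m i j := S i j %/ (av n m j %/ gv n m i j).
Definition evn k (S : 'M[nat]_k) n m (i : 'I_k) (x : nat) (j : 'I_k) (y : nat) : bool :=
  if i == j then ((x < hv n m i) != (y < hv n m i)) &&
                 ((x %% hv n m i + y %% hv n m i) %% hv n m i < S i i)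
  else (x + y) %% gv n m i j < rv S n m i j.
Definition ev k (S : 'M[nat]_k) n m : rel (VT n m) :=
  fun u v => evn S n m (tag u) (val (tagged u)) (tag v) (val (tagged v)).

Lemma card_cell k (S : 'M[nat]_k) n m (v : VT n m) j :
  #|[set w | ev S v w & tag w == j]| =
  \sum_(0 <= y < av n m j) evn S n m (tag v) (val (tagged v)) j y.
Proof.
have -> : [set w | ev S v w & tag w == j] =
   [set Tagged (fun i => 'I_(av n m i)) y | y in
      [pred y : 'I_(av n m j) | evn S n m (tag v) (val (tagged v)) j y]].
  apply/setP => w; rewrite inE; apply/andP/imsetP.
    by case: w => i y /= [H /eqP E]; subst i; exists y.
  by case=> y Hy ->; split; [exact Hy | rewrite /= eqxx].
rewrite card_imset; last exact: Tagged_inj.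
rewrite -sum1_card big_mkcond /= big_mkord.
by apply: eq_bigr => y _; rewrite inE; case: evn.
Qed.

Lemma gv_ge k (n : 'I_k -> nat) m i j : (forall i, 0 < n i) -> m.+1 * 2 <= gv n m i j.
Proof.
move=> np; apply: dvdn_leq.
  by rewrite gcdn_gt0 /av muln_gt0 np.
by rewrite dvdn_gcd /av; apply/andP; split; apply: dvdn_mull.
Qed.

Lemma rv_props k (S : 'M[nat]_k) (n : 'I_k -> nat) m i j :
  (forall i, 0 < n i) -> (forall i j, n i * S i j = n j * S j i) ->
  (av n m j %/ gv n m i j) %| S i j /\ rv S n m i j = rv S n m j i.
Proof.
move=> np hS.
set A := av n m i; set B := av n m j; set g := gv n m i j.
have g0 : 0 < g by rewrite /g gcdn_gt0 /av /A muln_gt0 np.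
set p := A %/ g; set q := B %/ g.
have Ap : A = p * g by rewrite divnK // dvdn_gcdl.
have Bq : B = q * g by rewrite divnK // dvdn_gcdr.
have A0 : 0 < A by rewrite /A /av muln_gt0 np.
have B0 : 0 < B by rewrite /B /av muln_gt0 np.
have p0 : 0 < p by move: A0; rewrite Ap muln_gt0 => /andP[].
have q0 : 0 < q by move: B0; rewrite Bq muln_gt0 => /andP[].
have cop : coprime p q.
  have : gcdn p q * g = 1 * g by rewrite muln_gcdl -Ap -Bq mul1n.
  by move/eqP; rewrite eqn_pmul2r // => /eqP.
have AB : A * S i j = B * S j i by rewrite /A /B /av mulnAC hS mulnAC.
have pq : p * S i j = q * S j i.
  by apply/eqP; rewrite -(eqn_pmul2r g0) mulnAC -Ap mulnAC -Bq AB.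
have qd : q %| S i j.
  have cqp : coprime q p by rewrite coprime_sym.
  by rewrite -(Gauss_dvdr _ cqp) pq dvdn_mulr ?dvdnn.
split => //.
rewrite /rv -/g -/q.
have -> : av n m i %/ gv n m j i = p by rewrite /p /A /g /gv gcdnC.
move: pq; rewrite -(divnK qd); set t := S i j %/ q => pq.
have St : S j i = p * t.
  apply/eqP; rewrite -(eqn_pmul2l q0) -pq; apply/eqP; nia.
by rewrite St mulKn // mulnK.
Qed.

Lemma evn_sym k (S : 'M[nat]_k) (n : 'I_k -> nat) m i x j y :
  (forall i, 0 < n i) -> (forall i j, n i * S i j = n j * S j i) ->
  evn S n m i x j y = evn S n m j y i x.
Proof.
move=> np hS; rewrite /evn eq_sym; case: eqP => [<-|ne].
  by rewrite addnC; congr (_ && _); case: (x < _); case: (y < _).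
by rewrite /gv gcdnC addnC (rv_props m i j np hS).2.
Qed.

Lemma evn_irr k (S : 'M[nat]_k) (n : 'I_k -> nat) m i x : evn S n m i x i x = false.
Proof. by rewrite /evn !eqxx. Qed.

Lemma count_cross k (S : 'M[nat]_k) (n : 'I_k -> nat) m i x j :
  (forall i, 0 < n i) -> (forall i j, n i * S i j = n j * S j i) ->
  (forall i j, S i j <= m) -> i != j ->
  \sum_(0 <= y < av n m j) evn S n m i x j y = S i j.
Proof.
move=> np hS hm ne.
rewrite (eq_big_nat _ _ (F2 := fun y => ((x + y) %% gv n m i j < rv S n m i j) : nat)); last first.
  by move=> y _; rewrite /evn (negbTE ne).
have [qd _] := rv_props m i j np hS.
have g0 : 0 < gv n m i j by rewrite gcdn_gt0 /av muln_gt0 np.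
have -> : av n m j = gv n m i j * (av n m j %/ gv n m i j).
  by rewrite mulnC divnK // dvdn_gcdr.
rewrite sum_window_mul; first by rewrite /rv divnK.
apply: (leq_trans (leq_div _ _)); apply: (leq_trans (hm i j)).
apply: leq_trans (gv_ge m i j np); lia.
Qed.

Lemma count_diag k (S : 'M[nat]_k) (n : 'I_k -> nat) m i x :
  (forall i, 0 < n i) -> (forall i j, S i j <= m) -> x < av n m i ->
  \sum_(0 <= y < av n m i) evn S n m i x i y = S i i.
Proof.
move=> np hm xa.
set h := hv n m i.
have ah : av n m i = h + h by rewrite /av /h /hv mulnA muln2 addnn.
have sh : S i i <= h.
  apply: leq_trans (hm i i) _; rewrite /h /hv; have := np i; nia.
rewrite ah (big_cat_nat _ (n := h)) //=; last exact: leq_addr.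
rewrite (eq_big_nat _ _ (m := 0) (n := h) (F2 := fun y => (~~ (x < h) && ((x %% h + y) %% h < S i i)) : nat)); last first.
  move=> y /andP[_ yh]; by rewrite /evn eqxx -/h yh (modn_small yh); case: (x < h).
have E := big_addn (op := addn) (idx := 0) 0 (h + h) h xpredT (fun y => (evn S n m i x i y : nat)).
rewrite add0n addnK in E; rewrite E.
rewrite [X in _ + X](eq_big_nat _ _ (m := 0) (n := h) (F2 := fun y => ((x < h) && ((x %% h + y) %% h < S i i)) : nat)); last first.
  move=> y /andP[_ yh]; rewrite /evn eqxx -/h.
  have -> : (y + h < h) = false by rewrite ltnNge leq_addl.
  by rewrite modnDr (modn_small yh); case: (x < h).
case: (x < h) => /=.
  by rewrite sum_nat_const_nat muln0 add0n sum_window.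
by rewrite sum_nat_const_nat muln0 addn0 sum_window.
Qed.

Lemma component_reg k (S : 'M[nat]_k) (T : finType) (e : rel T) :
  irreducible_mx S -> simple_graph e -> S_regular S e -> 'I_k ->
  exists (T' : finType) (e' : rel T'),
    simple_graph e' /\ connected_graph e' /\ S_regular S e'.
Proof.
move=> irr [esym eirr] [c [csurj ccnt]] i0.
have [v0 _] := csurj i0.
have inC : forall x y, connect e v0 x -> e x y -> connect e v0 y.
  by move=> x y H1 H2; apply: connect_trans H1 (connect1 H2).
pose T' := {x : T | connect e v0 x}.
pose e' := fun x y : T' => e (val x) (val y).
exists T', e'.
have e'sym : symmetric e' by move=> x y; exact: esym.
split; first by split => // x; exact: eirr.
have lift : forall p (x : T'), path e (val x) p ->
    forall y : T', val y = last (val x) p -> connect e' x y.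
  elim=> [|z p IH] x /=.
    by move=> _ y Hy; have -> : y = x by apply: val_inj.
  move=> /andP[exz pz] y Hy.
  pose z' := exist (fun t => connect e v0 t) z (inC _ _ (valP x) exz) : T'.
  apply: (connect_trans (connect1 (_ : e' x z'))); first exact: exz.
  exact: IH z' pz y Hy.
pose v0' := exist (fun t => connect e v0 t) v0 (connect0 _ _) : T'.
have fromv0 : forall y : T', connect e' v0' y.
  move=> y; have := valP y; case/connectP => p pth Hl.
  exact: lift p v0' pth y Hl.
split.
  move=> x y; apply: connect_trans (fromv0 y).
  by rewrite (sym_connect_sym e'sym) fromv0.
exists (fun x => c (val x)); split.
  move=> j; have := irr (c v0) j; case/connectP => p pth ->.
  have : exists w : T', c (val w) = c v0 by exists v0'.
  elim: p (c v0) pth => [|z p IH] i //= /andP[iz pz] [w Hw].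
  apply: IH => //.
  have : 0 < #|[set u | e (val w) u & c u == z]| by rewrite ccnt Hw lt0n.
  rewrite card_gt0 => /set0Pn [u]; rewrite inE => /andP[ewu /eqP cu].
  by exists (exist (fun t => connect e v0 t) u (inC _ _ (valP w) ewu)).
move=> v j; rewrite -ccnt -(card_imset _ val_inj); apply: eq_card => u.
rewrite inE; apply/imsetP/andP.
  by case=> w; rewrite inE => /andP[h1 h2] ->; split.
case=> h1 h2; exists (exist (fun t => connect e v0 t) u (inC _ _ (valP v) h1)) => //.
by rewrite inE; apply/andP; split.
Qed.

Theorem mainTheorem2 (k : nat) (S : 'M[nat]_k) :
  irreducible_mx S ->
  (exists n : 'I_k -> int,
      (exists i, n i != 0) /\
      (forall i j : 'I_k, (n i * (S i j)%:Z = n j * (S j i)%:Z)%R)) ->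
  exists (T : finType) (e : rel T),
    simple_graph e /\ connected_graph e /\ S_regular S e.
Proof.
move=> irr [n [[i0 hi0] heq]].
pose nn := fun j => `|n j|%N.
have hS : forall i j, nn i * S i j = nn j * S j i.
  by move=> i j; have := congr1 absz (heq i j); rewrite !abszM !absz_nat.
have np : forall j, 0 < nn j.
  move=> j; have := irr i0 j; case/connectP => p pth ->.
  have : 0 < nn i0 by rewrite /nn absz_gt0.
  clear hi0; elim: p i0 pth => [|z p IH] i //= /andP[iz pz] ni.
  apply: IH => //.
  have : 0 < nn i * S i z by rewrite muln_gt0 ni lt0n.
  by rewrite hS muln_gt0 => /andP[].
pose m := \max_(p : 'I_k * 'I_k) S p.1 p.2.
have hm : forall i j, S i j <= m.
  move=> i j; exact: (leq_bigmax (F := fun p : (ordinal k * ordinal k)%type => S p.1 p.2) (i, j)).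
apply: (@component_reg k S (VT nn m) (@ev k S nn m) irr _ _ i0).
  split; first by move=> u v; exact: evn_sym.
  by move=> u; exact: evn_irr.
exists (fun v => tag v); split.
  move=> i.
  have a0 : 0 < av nn m i by rewrite /av muln_gt0 np.
  by exists (Tagged (fun i => 'I_(av nn m i)) (Ordinal a0)).
move=> v j; rewrite card_cell.
case: (tag v =P j) => [<-|ne].
  by apply: count_diag => //; exact: ltn_ord.
by apply: count_cross => //; apply/eqP.
Qed.
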